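(* Let $H = \{h_0 = 0_H, h_1, \dots, h_{t-1}\}$ be a finite abelian group with a fixed enumeration of its elements, and let $\boldsymbol{\lambda} = (\lambda_0,\dots,\lambda_{t-1})$ be a sequence of nonnegative integers with $k = \lambda_0 + \cdots + \lambda_{t-1}$. Suppose that for infinitely many primes $p$, every non-zero sum subset of type $\boldsymbol{\lambda}$ of $(\mathbb{Z}_p \times H) \setminus \{0_{\mathbb{Z}_p\times H}\}$ is sequenceable. Then for every positive integer $m$ all of whose prime factors are greater than $k!/2$, every non-zero sum subset of type $\boldsymbol{\lambda}$ of $(\mathbb{Z}_m \times H) \setminus \{0_{\mathbb{Z}_m\times H}\}$ is sequenceable.
   Context: For a finite subset $S$ of an abelian group with $|S| = k$, an ordering $(x_1,\dots,x_k)$ of $S$ has partial sums $(y_0,\dots,y_k)$ with $y_0 = 0$, $y_i = x_1+\cdots+x_i$. It is a sequencing if the $y_i$ are pairwise distinct, and a rotational sequencing if they are pairwise distinct except that $y_k = y_0 = 0$; $S$ is sequenceable if it has one or the other. $S$ is non-zero sum if the sum of its elements is nonzero. The type of a finite subset $S \subseteq G \times H$ is $(\lambda_0,\dots,\lambda_{t-1})$ where $\lambda_i$ is the number of elements of $S$ whose $H$-coordinate equals $h_i$. *)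

(* Defs.v *)
From HB Require Import structures.
From mathcomp Require Import all_boot all_order all_algebra.
Set Implicit Arguments. Unset Strict Implicit. Unset Printing Implicit Defensive.
Import GRing.Theory.
Local Open Scope ring_scope.

HB.instance Definition _ (A H : finZmodType) := Finite.on (A * H)%type.

Definition psums (G : zmodType) (s : seq G) : seq G :=
  [seq \sum_(x <- take i s) x | i <- iota 0 (size s).+1].

Definition ordering_of (G : finZmodType) (S : {set G}) (s : seq G) : Prop :=
  uniq s /\ s =i S.

Definition is_sequencing (G : zmodType) (s : seq G) : Prop :=
  uniq (psums s).

(* rotational sequencing: y_0..y_{k-1} pairwise distinct and y_k = y_0 = 0 *)
Definition is_rot_sequencing (G : zmodType) (s : seq G) : Prop :=
  uniq (belast 0 (behead (psums s))) /\ \sum_(x <- s) x = 0.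

Definition sequenceable (G : finZmodType) (S : {set G}) : Prop :=
  exists s : seq G, ordering_of S s /\ (is_sequencing s \/ is_rot_sequencing s).

Definition nonzero_sum (G : finZmodType) (S : {set G}) : Prop :=
  \sum_(x in S) x != 0.

(* type of S ⊆ A × H: lam h = number of elements of S with H-coordinate h
   (the enumeration h_0 = 0, ..., h_{t-1} of H is encoded by indexing
   lam directly by the elements of H). *)
Definition has_type (A H : finZmodType) (S : {set A * H}) (lam : H -> nat) : Prop :=
  forall h : H, #|[set x in S | x.2 == h]| = lam h.

Definition all_seq_of_type (A H : finZmodType) (lam : H -> nat) : Prop :=
  forall S : {set A * H}, (0 : A * H) \notin S -> nonzero_sum S ->
    has_type S lam -> sequenceable S.

(* Main.v *)
Require Import Defs.
From HB Require Import structures.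
From mathcomp Require Import all_boot all_order all_algebra.
From mathcomp Require Import fingroup perm alt.
From mathcomp Require Import ring lra zify.
Set Implicit Arguments. Unset Strict Implicit. Unset Printing Implicit Defensive.
Import Order.TTheory GRing.Theory Num.Theory.
Local Open Scope ring_scope.

Lemma det01_bound r (P : 'M[int]_r) :
  (forall i j, P i j = 0 \/ P i j = 1) -> (1 < r)%N -> (`|\det P| * 2 <= (r`!)%:R :> int).
Proof.
move=> P01 r2.
have hprod : forall s : 'S_r, 0 <= \prod_i P i (s i) <= 1.
  move=> s; apply/andP; split; first by apply: prodr_ge0 => i _; case: (P01 i (s i)) => ->.
  apply: prodr_ile1 => i _; case: (P01 i (s i)) => -> //.
set E := \sum_(s : 'S_r | ~~ odd_perm s) \prod_i P i (s i).
set O := \sum_(s : 'S_r | odd_perm s) \prod_i P i (s i).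
have hdet : \det P = E - O.
  rewrite [LHS]/determinant (bigID (fun s : 'S_r => odd_perm s)) /= addrC -sumrN.
  congr (_ + _); apply: eq_bigr => s hs.
    by rewrite (negPf hs) expr0 mul1r.
  by rewrite hs expr1 mulN1r.
have cA : (2 * #|[set s : 'S_r | ~~ odd_perm s]|)%N = r`!.
  have := @card_Alt ('I_r); rewrite card_ord => /(_ r2) <-.
  by congr (2 * _)%N; apply: eq_card => s; rewrite inE Alt_even.
have cAll : (#|[set s : 'S_r | ~~ odd_perm s]| + #|[set s : 'S_r | odd_perm s]|)%N = r`!.
  rewrite -[r in RHS]card_ord -(card_Sym ('I_r)) /Sym cardsT -(cardsC [set s : 'S_r | ~~ odd_perm s]).
  by congr (_ + _)%N; apply: eq_card => s; rewrite !inE negbK.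
have hE : 0 <= E <= #|[set s : 'S_r | ~~ odd_perm s]|%:R.
  apply/andP; split; first by apply: sumr_ge0 => s _; case/andP: (hprod s).
  apply: le_trans (ler_sum _ (fun s _ => (proj2 (andP (hprod s))))) _.
  by rewrite sumr_const ler_nat; apply: subset_leq_card; apply/subsetP => s; rewrite inE.
have hO : 0 <= O <= #|[set s : 'S_r | odd_perm s]|%:R.
  apply/andP; split; first by apply: sumr_ge0 => s _; case/andP: (hprod s).
  apply: le_trans (ler_sum _ (fun s _ => (proj2 (andP (hprod s))))) _.
  by rewrite sumr_const ler_nat; apply: subset_leq_card; apply/subsetP => s; rewrite inE.
have cO : #|[set s : 'S_r | odd_perm s]| = #|[set s : 'S_r | ~~ odd_perm s]| by lia.
move: hE hO; rewrite hdet -cA natrM cO.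
set c := #|[set s : 'S_r | ~~ odd_perm s]|%:R.
move=> /andP[h1 h2] /andP[h3 h4].
have : - c <= E - O <= c by apply/andP; split; lra.
rewrite -ler_norml => h. 
by rewrite mulrC; apply: ler_pM => //; apply: normr_ge0.
Qed.

Lemma det01_bound1 r (P : 'M[int]_r) :
  (forall i j, P i j = 0 \/ P i j = 1) -> (`|\det P| <= (r`!)%:R :> int).
Proof.
move=> P01; rewrite [\det P]/determinant.
apply: le_trans (ler_norm_sum _ _ _) _.
have -> : (r`!)%:R = \sum_(s : 'S_r) (1 : int).
  by rewrite sumr_const card_Sn.
apply: ler_sum => s _; rewrite normrM normrX normrN normr1 expr1n mul1r.
rewrite ger0_norm; last by apply: prodr_ge0 => i _; case: (P01 i (s i)) => ->.
by apply: prodr_ile1 => i _; case: (P01 i (s i)) => ->.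
Qed.

Lemma dvdz_mulmx (m : int) k p (B : 'M[int]_(p,k)) (v : 'cV[int]_k) :
  (forall i, (m %| v i ord0)%Z) -> forall i, (m %| (B *m v) i ord0)%Z.
Proof.
move=> h i; rewrite mxE; apply: rpred_sum => j _; exact: dvdz_mull.
Qed.

Lemma not_in_row k s (m : nat) (M : 'M[int]_(s,k)) (a : 'cV[int]_k) (f : 'rV[int]_k) :
  (0 < m)%N ->
  (forall i j, M i j = 0 \/ M i j = 1) ->
  (forall q, prime q -> (q %| m)%N -> (k`! < 2*q)%N) ->
  (forall i, (m%:Z %| (M *m a) i ord0)%Z) ->
  ~~ (m%:Z %| (f *m a) ord0 ord0)%Z ->
  ~~ (map_mx (intr : int -> rat) f <= map_mx (intr : int -> rat) M)%MS.
Proof.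
move=> m0 M01 hq hMa hfa; apply/negP => sub.
set MQ := map_mx (intr : int -> rat) M.
set fQ := map_mx (intr : int -> rat) f.
pose rho := maxrankfun MQ.
have eqA : (rowsub rho MQ :=: MQ)%MS := eq_maxrowsub MQ.
have freeA : row_free (rowsub rho MQ) := maxrowsub_free MQ.
set A1 := rowsub rho M.
have A1Q : map_mx (intr : int -> rat) A1 = rowsub rho MQ by rewrite map_mxsub.
have fullT : row_full (rowsub rho MQ)^T.
  by rewrite /row_full mxrank_tr.
pose gam := fullrankfun fullT.
have unitT := fullrowsub_unit fullT.
set Pz := colsub gam A1.
have PQ : map_mx (intr : int -> rat) Pz = colsub gam (rowsub rho MQ) by rewrite map_mxsub A1Q.
have uP : colsub gam (rowsub rho MQ) \in unitmx.
  by rewrite -unitmx_tr trmx_mxsub.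
have : (fQ <= rowsub rho MQ)%MS by rewrite eqA.
case/submxP => w fw.
have cw : colsub gam fQ = w *m colsub gam (rowsub rho MQ) by rewrite fw mulmx_colsub.
have ww : w = colsub gam fQ *m invmx (colsub gam (rowsub rho MQ)) by rewrite cw mulmxK.
have E : map_mx (intr : int -> rat) ((\det Pz) *: f) = map_mx (intr : int -> rat) (colsub gam f *m \adj Pz *m A1).
  rewrite map_mxZ !map_mxM map_mxsub map_mx_adj PQ A1Q -/fQ.
  rewrite {1}fw ww /invmx uP -!mulmxA -scalemxAl -scalemxAr scalerA.
  rewrite -det_map_mx PQ mulfV ?scale1r //.
have {}E : (\det Pz) *: f = colsub gam f *m \adj Pz *m A1.
  apply/matrixP => i j; move/matrixP: E => /(_ i j).
  by rewrite [LHS]mxE [RHS]mxE; apply: intr_inj.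
have hdiv : (m%:Z %| \det Pz * (f *m a) ord0 ord0)%Z.
  have -> : \det Pz * (f *m a) 0 0 = (((\det Pz) *: f) *m a) 0 0.
    by rewrite -scalemxAl [RHS]mxE.
  rewrite E -!mulmxA; apply: dvdz_mulmx; apply: dvdz_mulmx => i.
  by rewrite /A1 mul_rowsub_mx mxE; apply: hMa.
have P01 : forall i j, Pz i j = 0 \/ Pz i j = 1 by move=> i j; rewrite !mxE.
have det0 : \det Pz != 0.
  move: uP; rewrite unitmxE unitfE -PQ det_map_mx.
  by apply: contra => /eqP ->.
have rk : (\rank MQ <= k)%N by apply: rank_leq_col.
have cop : coprime m `|\det Pz|%N.
  rewrite /coprime; apply/negPn/negP => hg.
  have g0 : (0 < gcdn m `|\det Pz|)%N by rewrite gcdn_gt0 m0.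
  have g1 : (1 < gcdn m `|\det Pz|)%N by move: hg g0; case: (gcdn _ _) => [|[|]].
  have qp := pdiv_prime g1.
  have qd := pdiv_dvd (gcdn m `|\det Pz|).
  have qm : (pdiv (gcdn m `|\det Pz|) %| m)%N by apply: dvdn_trans qd (dvdn_gcdl _ _).
  have qD : (pdiv (gcdn m `|\det Pz|) %| `|\det Pz|)%N by apply: dvdn_trans qd (dvdn_gcdr _ _).
  have d0 : (0 < `|\det Pz|)%N by rewrite absz_gt0.
  have qle := dvdn_leq d0 qD.
  have hk := hq _ qp qm.
  have q2 := prime_gt1 qp.
  have fk : ((\rank MQ)`! <= k`!)%N by apply: leq_fact.
  case: (ltnP 1 (\rank MQ)) => r2.
    have := det01_bound P01 r2.
    rewrite -abszE -PoszM natz lez_nat => hb.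
    lia.
  have := det01_bound1 P01.
  rewrite -abszE natz lez_nat.
  have : ((\rank MQ)`! <= 1)%N by case: (\rank MQ) r2 => [|[|]].
  lia.
move: hdiv hfa; rewrite !dvdzE abszM Gauss_dvdr //.
by rewrite /= => ->.
Qed.

Lemma avoid k s (MQ : 'M[rat]_(s,k)) (fs : seq 'rV[rat]_k) :
  (forall f, f \in fs -> exists x : 'cV_k, MQ *m x = 0 /\ (f *m x) 0 0 != 0) ->
  exists x : 'cV[rat]_k, MQ *m x = 0 /\ forall f, f \in fs -> (f *m x) 0 0 != 0.
Proof.
elim: fs => [|f rest IH] H.
  by exists 0; rewrite mulmx0; split.
have [x0 [Mx0 hx0]] : exists x : 'cV[rat]_k, MQ *m x = 0 /\ forall g, g \in rest -> (g *m x) 0 0 != 0.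
  by apply: IH => g hg; apply: H; rewrite inE hg orbT.
have [y [My hy]] := H f (mem_head _ _).
pose c : rat := 1 + \sum_(g <- f :: rest) `|(g *m x0) 0 0 / (g *m y) 0 0|.
have cge : forall g, g \in f :: rest -> `|(g *m x0) 0 0 / (g *m y) 0 0| < c.
  move=> g hg; rewrite /c.
  have : `|(g *m x0) 0 0 / (g *m y) 0 0| <= \sum_(g <- f :: rest) `|(g *m x0) 0 0 / (g *m y) 0 0|.
    rewrite (big_rem g hg) /=; rewrite lerDl; apply: sumr_ge0 => *; apply: normr_ge0.
  lra.
exists (x0 + c *: y); split.
  by rewrite mulmxDr Mx0 -scalemxAr My scaler0 addr0.
move=> g hg.
have -> : (g *m (x0 + c *: y)) 0 0 = (g *m x0) 0 0 + c * (g *m y) 0 0.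
  by rewrite mulmxDr -scalemxAr mxE [X in _ + X]mxE.
have [gy0|gyn0] := eqVneq ((g *m y) 0 0) 0.
  rewrite gy0 mulr0 addr0; apply: hx0.
  move: hg; rewrite inE => /orP[/eqP eg|//].
  by move: hy; rewrite -eg gy0 eqxx.
apply/negP => /eqP h.
have hc : c = - ((g *m x0) 0 0 / (g *m y) 0 0).
  rewrite -mulNr; apply: (mulIf gyn0); rewrite mulfVK //; lra.
have := cge g hg; rewrite -normrN -hc.
have cpos : 0 < c.
  rewrite /c; have : 0 <= \sum_(g <- f :: rest) `|(g *m x0) 0 0 / (g *m y) 0 0|.
    by apply: sumr_ge0 => *; apply: normr_ge0.
  lra.
by rewrite gtr0_norm // ltxx.
Qed.

Lemma map_intrE m n (A : 'M[int]_(m,n)) i j : map_mx (intr : int -> rat) A i j = (A i j)%:~R.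
Proof. by rewrite mxE. Qed.

Lemma kernel_witness k s (MQ : 'M[rat]_(s,k)) (fQ : 'rV[rat]_k) :
  ~~ (fQ <= MQ)%MS -> exists x : 'cV_k, MQ *m x = 0 /\ (fQ *m x) 0 0 != 0.
Proof.
rewrite submxE => hn.
have [j hj] : exists j, (fQ *m cokermx MQ) 0 j != 0.
  apply/existsP; move: hn; apply: contraR; rewrite negb_exists => /forallP h.
  apply/eqP/matrixP => i j; rewrite ord1 [RHS]mxE; apply/eqP; move: (h j); by rewrite negbK.
exists (col j (cokermx MQ)); split.
  by rewrite colE mulmxA mulmx_coker mul0mx.
by rewrite colE mulmxA -colE mxE.
Qed.

Lemma core k s (m : nat) (M : 'M[int]_(s,k)) (a : 'cV[int]_k) (fs : seq 'rV[int]_k) :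
  (0 < m)%N ->
  (forall i j, M i j = 0 \/ M i j = 1) ->
  (forall q, prime q -> (q %| m)%N -> (k`! < 2*q)%N) ->
  (forall i, (m%:Z %| (M *m a) i ord0)%Z) ->
  (forall f, f \in fs -> ~~ (m%:Z %| (f *m a) ord0 ord0)%Z) ->
  exists x : 'cV[int]_k, M *m x = 0 /\ forall f, f \in fs -> (f *m x) 0 0 != 0.
Proof.
move=> m0 M01 hq hMa hfs.
set MQ := map_mx (intr : int -> rat) M.
have [xQ [MxQ hxQ]] := @avoid k s MQ (map (map_mx (intr : int -> rat)) fs) (fun fQ hf =>
  match mapP hf with ex_intro2 f hf e => ltac:(rewrite e; apply: kernel_witness;
       exact: (not_in_row m0 M01 hq hMa (hfs f hf))) end).
pose d : int := \prod_i denq (xQ i 0).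
pose z : 'cV[int]_k := \col_i (numq (xQ i 0) * \prod_(j | j != i) denq (xQ j 0)).
have d0 : d != 0 by rewrite prodf_seq_neq0; apply/allP => i _; rewrite denq_neq0.
have hz : map_mx (intr : int -> rat) z = d%:~R *: xQ.
  apply/matrixP => i j; rewrite ord1 map_intrE !mxE /= intrM numqE /d. rewrite [X in _ = X%:~R * _](bigD1 i) //= intrM.
  ring.
exists z; split.
  have e : map_mx (intr : int -> rat) (M *m z) = MQ *m map_mx (intr : int -> rat) z by rewrite map_mxM.
  apply/matrixP => i j; apply: (@intr_inj rat); rewrite ord1.
  have := congr1 (fun A : 'M[rat]_(s,1) => A i 0) e.
  rewrite map_intrE => ->; rewrite hz -scalemxAr MxQ scaler0 !mxE.
  by [].
move=> f hf; have := hxQ _ (map_f (map_mx (intr : int -> rat)) hf).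
apply: contra => /eqP h.
have e : map_mx (intr : int -> rat) (f *m z) = map_mx (intr : int -> rat) f *m map_mx (intr : int -> rat) z by rewrite map_mxM.
have := congr1 (fun A : 'M[rat]_(1,1) => A 0 0) e.
rewrite map_intrE h hz -scalemxAr mxE => /esym/eqP.
by rewrite mulf_eq0 intr_eq0 (negPf d0).
Qed.

Lemma sum_pair (G1 G2 : zmodType) (I : Type) (r : seq I) (P : pred I) (F : I -> G1 * G2) :
  \sum_(i <- r | P i) F i = (\sum_(i <- r | P i) (F i).1, \sum_(i <- r | P i) (F i).2).
Proof.
elim: r => [|x r IH]; first by rewrite !big_nil.
by rewrite !big_cons; case: (P x); rewrite IH.
Qed.

Lemma val_sumZ n (I : Type) (r : seq I) (P : pred I) (u : I -> 'I_n.+1) :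
  val (\sum_(i <- r | P i) u i) = ((\sum_(i <- r | P i) val (u i)) %% n.+1)%N.
Proof.
elim: r => [|x r IH]; first by rewrite !big_nil /= mod0n.
rewrite !big_cons; case: (P x) => //.
by rewrite /= IH modnDmr.
Qed.

Lemma uniq_map_transfer (I A B : eqType) (F : I -> A) (F' : I -> B) (r : seq I) :
  {in r &, forall i j, F i = F j -> F' i = F' j} -> uniq (map F' r) -> uniq (map F r).
Proof.
elim: r => [|x r IH] //= h /andP[hx hu]; apply/andP; split; last first.
  by apply: IH => // i j hi hj; apply: h; rewrite inE ?hi ?hj orbT.
apply: contra hx => /mapP [y hy e].
by apply/mapP; exists y => //; apply: h; rewrite ?inE ?eqxx ?hy ?orbT.
Qed.

Lemma psums_transfer (G G' : zmodType) (s : seq G) (s' : seq G') :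
  size s = size s' ->
  (forall u v, (u <= v)%N -> \sum_(x <- drop u (take v s)) x = 0 ->
               \sum_(x <- drop u (take v s')) x = 0) ->
  uniq (psums s') -> uniq (psums s).
Proof.
move=> hsz h; rewrite /psums hsz; apply: uniq_map_transfer => i j _ _.
have key : forall (H : zmodType) (t : seq H) u v, (u <= v)%N ->
    \sum_(x <- take v t) x = \sum_(x <- take u t) x + \sum_(x <- drop u (take v t)) x.
  move=> Hh t u v huv.
  by rewrite -big_cat /= -{1}(cat_take_drop u (take v t)) take_takel.
wlog hij : i j / (i <= j)%N.
  move=> W; case: (leqP i j) => hij; first exact: W.
  by move=> e; apply/esym; apply: W (ltnW hij) (esym e).
rewrite (key _ s _ _ hij) (key _ s' _ _ hij) => e.
have : \sum_(x <- drop i (take j s)) x = 0.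
  by apply: (@addrI _ (\sum_(x <- take i s) x)); rewrite addr0 -e.
by move/(h _ _ hij) => ->; rewrite addr0.
Qed.

Lemma Zp_nat_neq0 p (n : nat) : prime p -> (0 < n < p)%N -> (n%:R : 'Z_p) != 0.
Proof.
move=> pp /andP[h0 hp]; apply/negP => /eqP e; have := congr1 (@nat_of_ord _) e.
by rewrite val_Zp_nat ?prime_gt1 // modn_small //= => e'; move: h0; rewrite e'.
Qed.

Lemma Zp_intr_neq0 p (z : int) : prime p -> z != 0 -> (`|z| < p)%N -> (z%:~R : 'Z_p) != 0.
Proof.
move=> pp; case: z => [n|n] /= hz hn.
  by apply: Zp_nat_neq0 => //; rewrite hn andbT lt0n; apply: contra hz => /eqP ->.
rewrite NegzE mulrNz oppr_eq0; exact: Zp_nat_neq0.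
Qed.

Lemma ord_diff_ndvd n (u v : 'I_n.+1) : u != v -> ~~ (n.+1%:Z %| u%:Z - v%:Z)%Z.
Proof.
rewrite dvdzE -(inj_eq val_inj) /=.
have := ltn_ord u; have := ltn_ord v.
move: (nat_of_ord u) (nat_of_ord v) => x y hx hy hxy.
apply/negP => /dvdnP [c hc].
have [t [ht1 ht2 ht3]] : exists t, [/\ (0 < t)%N, (t < n.+1)%N & t = (c * n.+1)%N].
  case: (leqP y x) => h.
    exists (x - y)%N; rewrite -hc subzn // absz_nat; split => //.
      by rewrite subn_gt0 ltn_neqAle h andbT; apply: contra hxy => /eqP ->.
    exact: leq_ltn_trans (leq_subr _ _) hy.
  have h' : (x <= y)%N by apply: ltnW.
  exists (y - x)%N; rewrite -hc -[(x%:Z - y%:Z)]opprB abszN subzn // absz_nat; split => //.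
    by rewrite subn_gt0.
  exact: leq_ltn_trans (leq_subr _ _) hx.
move: ht1 ht2; rewrite ht3; case: c {hc ht3} => [|c]; rewrite ?mul0n // mulSn.
by move=> _; rewrite ltnNge leq_addr.
Qed.

Lemma form_diff K (v : 'cV[int]_K) i j : ((delta_mx 0 i - delta_mx 0 j : 'rV[int]_K) *m v) 0 0 = v i 0 - v j 0.
Proof. by rewrite mulmxBl -!rowE !mxE. Qed.

Lemma form_one K (v : 'cV[int]_K) i : ((delta_mx 0 i : 'rV[int]_K) *m v) 0 0 = v i 0.
Proof. by rewrite -rowE !mxE. Qed.

Lemma form_all K (v : 'cV[int]_K) : ((const_mx 1 : 'rV[int]_K) *m v) 0 0 = \sum_i v i 0.
Proof. by rewrite !mxE; apply: eq_bigr => i _; rewrite mxE mul1r. Qed.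

Lemma card_img_filter (T : finType) K (f : 'I_K -> T) (P : pred T) :
  injective f -> #|[set y in f @: setT | P y]| = #|[set i | P (f i)]|.
Proof.
move=> finj; rewrite -(card_imset _ finj); apply: eq_card => y.
rewrite !inE; apply/andP/imsetP => [[/imsetP [i _ ->] hP]|[i hi ->]].
  by exists i; rewrite ?inE.
by split; [apply: imset_f; rewrite inE | move: hi; rewrite inE].
Qed.

Lemma sum_img (T : finType) (G : zmodType) K (f : 'I_K -> T) (F : T -> G) (L : seq T) :
  injective f -> uniq L -> {subset L <= [set f i | i in [set: 'I_K]]} ->
  \sum_(y <- L) F y = \sum_(i in [set i | f i \in L]) F (f i).
Proof.
move=> finj uL sL; rewrite big_uniq //= -(big_imset F (h:=f)) /=; last first.
  by move=> i j _ _; apply: finj.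
apply: eq_bigl => y; apply/idP/imsetP => [hy|[i hi ->]].
  by have /imsetP [i _ e] := sL _ hy; exists i; rewrite // inE -e.
by move: hi; rewrite inE.
Qed.

Lemma pair_eq0 (A B : zmodType) (u : A) (v : B) : ((u, v) == 0) = (u == 0) && (v == 0).
Proof. by []. Qed.

Lemma sum_setT (G : zmodType) K (F : 'I_K -> G) : \sum_(i in [set: 'I_K]) F i = \sum_i F i.
Proof. by apply: eq_bigl => i; rewrite inE. Qed.

Theorem theorem4p12 (H : finZmodType) (lam : H -> nat) :
  let k := (\sum_(h : H) lam h)%N in
  (forall N : nat, exists p : nat,
      (N < p)%N /\ prime p /\ all_seq_of_type 'Z_p lam) ->
  forall n : nat,
    (forall q : nat, prime q -> (q %| n.+1)%N -> (k`! < 2 * q)%N) ->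
    all_seq_of_type 'I_n.+1 lam.
Proof.
move=> k hp n hq S S0 Snz Stype.
have hK : #|S| = k.
  rewrite /k -(eq_bigr _ (fun h _ => Stype h)) -sum1_card.
  rewrite (partition_big (fun x => x.2) predT) //=.
  apply: eq_bigr => h _; rewrite -sum1_card; apply: eq_bigl => x; rewrite inE.
  by [].
set K := #|S|.
pose e (i : 'I_K) : 'I_n.+1 * H := enum_val i.
have eS : forall i, e i \in S by move=> i; apply: enum_valP.
have einj : injective e by apply: enum_val_inj.
have Sim : forall y, y \in S -> exists i, e i = y.
  by move=> y yS; exists (enum_rank_in yS y); rewrite /e enum_rankK_in.
pose a : 'cV[int]_K := \col_i (nat_of_ord (e i).1)%:Z.
pose M : 'M[int]_(#|{set 'I_K}|, K) := \matrix_(j, i)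
  (if (n.+1%:Z %| \sum_(l in (enum_val j : {set 'I_K})) a l ord0)%Z && (i \in (enum_val j : {set 'I_K}))
   then 1 else 0).
have rowM : forall (v : 'cV[int]_K) (T : {set 'I_K}),
    (M *m v) (enum_rank T) 0 =
    if (n.+1%:Z %| \sum_(l in T) a l ord0)%Z then \sum_(l in T) v l 0 else 0.
  move=> v T; rewrite mxE.
  under eq_bigr do rewrite mxE enum_rankK.
  case: ifP => _ /=; last by rewrite big1 // => i _; rewrite mul0r.
  by rewrite [RHS]big_mkcond /=; apply: eq_bigr => i _; case: (i \in T); rewrite ?mul1r ?mul0r.
pose cands : seq 'rV[int]_K :=
  [seq delta_mx 0 i - delta_mx 0 j | i <- enum 'I_K, j <- enum 'I_K] ++
  [seq delta_mx 0 i | i <- enum 'I_K] ++ [:: const_mx 1].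
pose fs := [seq f <- cands | ~~ (n.+1%:Z %| (f *m a) ord0 ord0)%Z].
have [x [Mx hx]] : exists x : 'cV[int]_K, M *m x = 0 /\ forall f, f \in fs -> (f *m x) 0 0 != 0.
  apply: (@core K _ n.+1 M a fs) => //.
  - by move=> i j; rewrite mxE; case: ifP; [right|left].
  - by rewrite /K hK.
  - move=> j; rewrite -[j]enum_valK rowM; case: ifP => //.
  - by move=> f; rewrite mem_filter => /andP [].
have hT : forall T : {set 'I_K}, (n.+1%:Z %| \sum_(l in T) a l ord0)%Z -> \sum_(l in T) x l 0 = 0.
  by move=> T hT; have := rowM x T; rewrite hT Mx mxE => <-.
have hdiff : forall i j, ~~ (n.+1%:Z %| a i ord0 - a j ord0)%Z -> x i 0 - x j 0 != 0.
  move=> i j h; rewrite -form_diff; apply: hx; rewrite mem_filter form_diff h /=.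
  by rewrite mem_cat; apply/orP; left; apply: allpairs_f; rewrite mem_enum.
have hone : forall i, ~~ (n.+1%:Z %| a i ord0)%Z -> x i 0 != 0.
  move=> i h; rewrite -form_one; apply: hx; rewrite mem_filter form_one h /=.
  by rewrite !mem_cat; apply/orP; right; apply/orP; left; apply: map_f; rewrite mem_enum.
have hall : ~~ (n.+1%:Z %| \sum_i a i ord0)%Z -> \sum_i x i 0 != 0.
  move=> h; rewrite -form_all; apply: hx; rewrite mem_filter form_all h /=.
  by rewrite !mem_cat; apply/orP; right; apply/orP; right; rewrite mem_seq1.
have dv : forall P : pred 'I_K,
    (n.+1%:Z %| \sum_(i | P i) a i ord0)%Z = (\sum_(i | P i) (e i).1 == 0).
  move=> P; rewrite (eq_bigr (fun i => Posz (nat_of_ord (e i).1))); last by move=> i _; rewrite mxE.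
  rewrite -(big_morph Posz PoszD (erefl (Posz 0))) dvdzE absz_nat.
  by rewrite -(inj_eq val_inj) /= val_sumZ.
pose N := (\sum_i \sum_j absz (x i 0 - x j 0)%R + \sum_i absz (x i 0)%R + absz (\sum_i x i 0)%R)%N.
have [p [Np [pp hpS]]] := hp N.
have hnz : forall z : int, z != 0 -> (`|z| <= N)%N -> (z%:~R : 'Z_p) != 0.
  by move=> z h1 h2; apply: Zp_intr_neq0 => //; apply: leq_ltn_trans h2 Np.
have bd1 : forall i j, (absz (x i 0 - x j 0)%R <= N)%N.
  move=> i j; rewrite /N (bigD1 i) //= (bigD1 j) //=; lia.
have bd2 : forall i, (absz (x i 0)%R <= N)%N.
  move=> i; rewrite /N [X in (_ + X + _)%N](bigD1 i) //=; lia.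
have bd3 : (absz (\sum_i x i 0)%R <= N)%N by rewrite /N; lia.
pose g (i : 'I_K) : 'Z_p * H := ((x i 0)%:~R, (e i).2).
have ginj : injective g.
  move=> i j /eqP; rewrite xpair_eqE => /andP [/eqP h1 /eqP h2].
  apply/eqP; apply: contraT => hij.
  have ne : e i != e j by rewrite (inj_eq einj).
  have ne1 : (e i).1 != (e j).1.
    apply: contra ne => /eqP h; apply/eqP; move: h h2.
    by case: (e i) => ? ?; case: (e j) => ? ? /= -> ->.
  have hd : ~~ (n.+1%:Z %| a i ord0 - a j ord0)%Z by rewrite !mxE; exact: ord_diff_ndvd ne1.
  have := hnz _ (hdiff i j hd) (bd1 i j).
  by rewrite intrB h1 subrr eqxx.
have Seq : S = [set e i | i in [set: 'I_K]].
  apply/setP => y; apply/idP/imsetP => [/Sim [i <-]|[i _ ->]]; last exact: eS.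
  by exists i; rewrite ?inE.
pose S' := [set g i | i in [set: 'I_K]].
have S'0 : (0 : 'Z_p * H) \notin S'.
  apply/imsetP => [[i _ h]].
  move/eqP: h; rewrite xpair_eqE => /andP [/eqP h1 /eqP h2].
  have ne : e i != 0 by apply: contraNneq S0 => <-; apply: eS.
  have ne1 : (e i).1 != 0.
    apply: contra ne => /eqP h; apply/eqP; move: h h2.
    by case: (e i) => ? ? /= -> <-.
  have hd : ~~ (n.+1%:Z %| a i ord0)%Z.
    by rewrite !mxE; have := ord_diff_ndvd ne1; rewrite subr0.
  by have := hnz _ (hone i hd) (bd2 i); rewrite -h1 eqxx.
have Snz' : nonzero_sum S'.
  rewrite /nonzero_sum big_imset /=; last by move=> i j _ _; apply: ginj.
  move: Snz; rewrite /nonzero_sum Seq big_imset /=; last by move=> i j _ _; apply: einj.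
  rewrite !sum_pair /= !sum_setT !pair_eq0 !negb_and.
  case: (eqVneq (\sum_i (e i).2) 0) => h2; rewrite ?orbT // orbF => h1.
  have hd : ~~ (n.+1%:Z %| \sum_i a i ord0)%Z by rewrite (dv predT).
  have := hnz _ (hall hd) bd3.
  by rewrite rmorph_sum /= => ->.
have Stype' : has_type S' lam.
  move=> h; rewrite card_img_filter // -(Stype h) Seq card_img_filter //.
have [s' [[us' ms'] hs']] := hpS S' S'0 Snz' Stype'.
have seq' : is_sequencing s'.
  case: hs' => // [[_ hsum]]; move: Snz'; rewrite /nonzero_sum.
  rewrite (eq_bigl (fun y => y \in s')); last by move=> y; rewrite ms'.
  by rewrite -big_uniq // hsum eqxx.
pose back (y : 'Z_p * H) : 'I_n.+1 * H := if [pick i | g i == y] is Some i then e i else 0.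
have backg : forall i, back (g i) = e i.
  move=> i; rewrite /back; case: pickP => [j /eqP hj|hn]; first by rewrite (ginj _ _ hj).
  by have := hn i; rewrite eqxx.
have inS' : forall y, y \in S' -> exists i, y = g i.
  by move=> y /imsetP [i _ ->]; exists i.
exists (map back s'); split; first split.
- rewrite map_inj_in_uniq // => y1 y2 h1 h2.
  have [i1 ->] : exists i, y1 = g i by apply: inS'; rewrite -ms'.
  have [i2 ->] : exists i, y2 = g i by apply: inS'; rewrite -ms'.
  by rewrite !backg => /einj ->.
- move=> y; apply/mapP/idP => [[y' hy' ->]|yS].
    have [i ->] : exists i, y' = g i by apply: inS'; rewrite -ms'.
    by rewrite backg eS.
  have [i <-] := Sim y yS; exists (g i); last by rewrite backg.
  by rewrite ms'; apply: imset_f; rewrite inE.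
left; apply: (psums_transfer (s' := s')); rewrite ?size_map // => u v huv.
rewrite -map_take -map_drop big_map.
set L := drop u (take v s').
have uL : uniq L by rewrite drop_uniq // take_uniq.
have sL : {subset L <= S'} by move=> y /mem_drop /mem_take; rewrite ms'.
rewrite (sum_img back ginj uL sL) (sum_img id ginj uL sL) /=.
under eq_bigr do rewrite backg.
set T := [set i | g i \in L].
rewrite !sum_pair => /eqP; rewrite pair_eq0 => /andP [/eqP h1 /eqP h2].
have hd : (n.+1%:Z %| \sum_(i in T) a i ord0)%Z by rewrite dv h1.
by rewrite /= -rmorph_sum hT // h2.
Qed.
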